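(* Let $M$ be a maximal ideal of a commutative semigroup $S$. The following are equivalent: (i) $M$ is a prime ideal; (ii) $\mathrm{Sep}\,M\neq\emptyset$; (iii) the factor semigroup $S/P_M$ is a two-element monoid with a zero.
   Context: A proper ideal $I$ of $S$ (i.e. $I\neq S$) is prime if $ab\in I$ implies $a\in I$ or $b\in I$. A proper ideal $M$ is maximal if for every ideal $A$ with $M\subseteq A\subseteq S$ we have $A=M$ or $A=S$. For $A\subseteq S$: $\mathrm{Id}\,A=\{x\in S: xA\subseteq A,\ Ax\subseteq A\}$ and $\mathrm{Sep}\,A=\mathrm{Id}\,A\cap\mathrm{Id}(S\setminus A)$. For $H\subseteq S$, $a\in S$: $H\dots a=\{(x,y)\in S\times S: xay\in H\}$ and $P_H=\{(a,b)\in S\times S: H\dots a=H\dots b\}$. *)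

(* Defs.v *)
Set Implicit Arguments.

Section SemigroupDefs.
Variables (S : Type) (mul : S -> S -> S).

Definition is_ideal (I : S -> Prop) : Prop :=
  (exists a, I a) /\ (forall s a, I a -> I (mul s a) /\ I (mul a s)).

Definition proper (I : S -> Prop) : Prop := exists s, ~ I s.

Definition is_prime_ideal (I : S -> Prop) : Prop :=
  is_ideal I /\ proper I /\ (forall a b, I (mul a b) -> I a \/ I b).

Definition is_maximal_ideal (M : S -> Prop) : Prop :=
  is_ideal M /\ proper M /\
  forall A : S -> Prop, is_ideal A -> (forall x, M x -> A x) ->
    (forall x, A x <-> M x) \/ (forall x, A x).

Definition Id (A : S -> Prop) : S -> Prop :=
  fun x => forall a, A a -> A (mul x a) /\ A (mul a x).

Definition Sep (A : S -> Prop) : S -> Prop :=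
  fun x => Id A x /\ Id (fun y => ~ A y) x.

Definition dots (H : S -> Prop) (a : S) : S -> S -> Prop :=
  fun x y => H (mul (mul x a) y).

Definition P_ (H : S -> Prop) : S -> S -> Prop :=
  fun a b => forall x y, dots H a x y <-> dots H b x y.

(* The factor semigroup S/theta (theta a congruence, elements = theta-classes
   [s], product [a][b] = [ab]) is a two-element monoid with a zero:
   there are classes [e] <> [z] such that every class is [e] or [z],
   [e] is an identity and [z] is a zero of S/theta. *)
Definition factor_two_elem_monoid_with_zero (theta : S -> S -> Prop) : Prop :=
  exists e z : S,
    ~ theta e z /\
    (forall s, theta s e \/ theta s z) /\
    (forall s, theta (mul e s) s /\ theta (mul s e) s) /\
    (forall s, theta (mul z s) z /\ theta (mul s z) z).

End SemigroupDefs.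

(* Main.v *)
Require Import Defs.
From Stdlib Require Import Classical.

Section Aux.
Variables (S : Type) (mul : S -> S -> S)
  (mul_assoc : forall a b c, mul a (mul b c) = mul (mul a b) c)
  (mul_comm : forall a b, mul a b = mul b a)
  (M : S -> Prop) (HM : is_maximal_ideal mul M).

Lemma cover a t : ~ M a -> ~ M t -> t = a \/ exists s, t = mul a s.
Proof.
  intros Ha Ht. destruct HM as [HI [Hp Hmax]].
  set (A := fun y => M y \/ y = a \/ exists s, y = mul a s).
  assert (HA : is_ideal mul A).
  { split. exists a. unfold A; auto.
    intros s y [Hy|[Hy|[s' Hy]]]; unfold A.
    - destruct (proj2 HI s y Hy); split; left; auto.
    - subst y. split; right; right. exists s; apply mul_comm. exists s; auto.
    - subst y. split; right; right.
      exists (mul s' s). rewrite (mul_comm s (mul a s')), mul_assoc; auto.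
      exists (mul s' s). rewrite mul_assoc; auto. }
  destruct (Hmax A HA) as [H|H].
  - intros x Hx; unfold A; auto.
  - exfalso. apply Ha. apply H. unfold A; auto.
  - destruct (H t) as [H1|H1]; [contradiction|exact H1].
Qed.

Lemma ideal_in m u v : M m -> M (mul (mul u m) v).
Proof. intro Hm. destruct HM as [[_ HI] _].
  apply (HI v (mul u m)). apply (HI u m Hm). Qed.

Lemma sep_prime x : Sep mul M x -> is_prime_ideal mul M.
Proof.
  intros [_ Hx]. destruct HM as [HI [Hp Hmax]].
  split; [exact HI|split; [exact Hp|]].
  assert (Hxn : ~ M x).
  { destruct Hp as [s Hs]. intro Hm. apply (proj1 (Hx s Hs)).
    apply (proj2 HI s x Hm). }
  intros a b Hab. destruct (Classical_Prop.classic (M a)) as [|Ha]; auto.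
  destruct (Classical_Prop.classic (M b)) as [|Hb]; auto.
  exfalso. destruct (cover a x Ha Hxn) as [E|[s E]]; subst x.
  - exact (proj2 (Hx b Hb) ltac:(rewrite mul_comm; exact Hab)).
  - apply (proj2 (Hx b Hb)). rewrite mul_assoc, (mul_comm b a).
    apply (proj2 (proj2 HI s _ Hab)).
Qed.

Lemma prime_P a b : is_prime_ideal mul M -> (exists w, ~ M w) ->
  (M a <-> M b) -> P_ mul M a b.
Proof.
  intros [[_ HI] [_ Hpr]] _ Hab u v. unfold dots.
  assert (K : forall c, M (mul (mul u c) v) <-> M u \/ M c \/ M v).
  { intro c. split.
    - intro H. destruct (Hpr _ _ H) as [H1|H1]; auto.
      destruct (Hpr _ _ H1); auto.
    - intros [H|[H|H]].
      + apply (HI v). apply (HI c u H).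
      + apply ideal_in; auto.
      + apply (HI (mul u c) v H). }
  rewrite !K. tauto.
Qed.

End Aux.

Theorem theorem2 (S : Type) (mul : S -> S -> S)
  (mul_assoc : forall a b c, mul a (mul b c) = mul (mul a b) c)
  (mul_comm : forall a b, mul a b = mul b a)
  (M : S -> Prop) (HM : is_maximal_ideal mul M) :
  (is_prime_ideal mul M <-> exists x, Sep mul M x) /\
  ((exists x, Sep mul M x) <-> factor_two_elem_monoid_with_zero mul (P_ mul M)).
Proof.
  assert (HM' := HM). destruct HM' as [[[m Hm] HI] [[w Hw] Hmax]].
  assert (I1 : is_prime_ideal mul M -> exists x, Sep mul M x).
  { intros [_ [_ Hpr]]. exists w. split.
    - intros a Ha. split. apply (HI w a Ha). apply (HI w a Ha).
    - intros a Ha. split; intro H.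
      + destruct (Hpr _ _ H); contradiction.
      + destruct (Hpr _ _ H); contradiction. }
  split; [split; [exact I1| intros [x Hx]; eapply sep_prime; eauto]|].
  split.
  - intros [x Hx]. assert (Hp := sep_prime _ _ mul_assoc mul_comm _ HM x Hx).
    assert (Hw' : exists w, ~ M w) by eauto.
    assert (Hpr := proj2 (proj2 Hp)).
    exists w, m. split; [|split; [|split]].
    + intro H. apply Hw. assert (H2 : M (mul (mul w w) w)).
      { apply (proj2 (H w w)). apply (ideal_in _ _ _ HM); auto. }
      destruct (Hpr _ _ H2) as [H3|H3]; auto. destruct (Hpr _ _ H3); auto.
    + intro s. destruct (Classical_Prop.classic (M s)).
      * right. apply prime_P; auto. tauto.
      * left. apply prime_P; auto. tauto.
    + intro s. split; apply prime_P; auto.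
      * split; intro H. destruct (Hpr _ _ H); tauto. apply (HI w s H).
      * split; intro H. destruct (Hpr _ _ H); tauto. apply (HI w s H).
    + intro s. split; apply prime_P; auto.
      * split; intro; auto. apply (HI s m Hm).
      * split; intro; auto. apply (HI s m Hm).
  - intros [e [z [Hez [Hcov [He Hz]]]]].
    assert (full : forall a, (forall u v, dots mul M a u v) -> P_ mul M a m).
    { intros a Ha u v. split; intro. unfold dots; apply (ideal_in _ _ _ HM); auto. apply Ha. }
    assert (mfull : forall u v, dots mul M m u v) by (intros; unfold dots; apply (ideal_in _ _ _ HM); auto).
    assert (Pt : forall a b c, P_ mul M a b -> P_ mul M b c -> P_ mul M a c).
    { intros a b c H1 H2 u v. rewrite (H1 u v). apply H2. }
    assert (Ps : forall a b, P_ mul M a b -> P_ mul M b a).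
    { intros a b H u v. symmetry. apply H. }
    assert (shift : forall a s, (forall u v, dots mul M a u v) ->
               forall u v, dots mul M (mul a s) u v).
    { intros a s Ha u v. unfold dots. rewrite (mul_assoc u a s), <- (mul_assoc (mul u a) s v). apply Ha. }
    assert (Hmz : P_ mul M m z).
    { destruct (Hcov m) as [H|H]; auto. exfalso. apply Hez.
      assert (Fe : forall u v, dots mul M e u v) by (intros; apply (H u v); apply mfull).
      assert (Fz : forall u v, dots mul M (mul e z) u v) by (apply shift; auto).
      apply Pt with m. apply full; auto.
      apply Ps. apply Pt with (mul e z). apply Ps, He. apply full; auto. }
    assert (efull_bad : (forall u v, dots mul M e u v) -> False).
    { intro F. apply Hez. apply Pt with m; auto. }
    assert (Hen : ~ M e).
    { intro H. apply efull_bad. intros; unfold dots; apply (ideal_in _ _ _ HM); auto. }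
    exists e. split.
    + intros a Ha. split. apply (HI e a Ha). apply (HI e a Ha).
    + assert (K : forall y, ~ M y -> ~ M (mul e y)).
      { intros y Hy H. 
        assert (Fy : forall u v, dots mul M y u v).
        { intros u v. apply (proj1 (He y) u v). unfold dots; apply (ideal_in _ _ _ HM); auto. }
        destruct (cover _ _ mul_assoc mul_comm _ HM y e Hy Hen) as [E|[s E]]; subst e.
        - apply efull_bad; auto.
        - apply efull_bad. apply shift; auto. }
      intros a Ha. split; auto. rewrite mul_comm. auto.
Qed.
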